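(* Let $F : L_n \to \Delta K$ be a non-degenerate $2$-filtration, fix a dimension $q$, and fix grades $d,h$ with $(1,1)\le d\le h-(1,1)$. Set $a=d-(1,1)$, $b=d-(1,0)$, $c=d-(0,1)$, $e=h-(1,1)$, $f=h-(1,0)$, $g=h-(0,1)$. If $adeh=1$, then \[abeh\cdot adef=abef,\quad aceh\cdot adef=acef,\quad abeh\cdot adeg=abeg,\quad aceh\cdot adeg=aceg.\]
   Context: $K$ is a finite simplicial complex, coefficients in a field. $L_n=\{0,\dots,n\}^2$ with product order, $\bot=(0,0)$, $\top=(n,n)$. A $2$-filtration is a monotone map $F$ from $L_n$ to subcomplexes of $K$ with $F(\bot)=\emptyset$, $F(\top)=K$. $ZB_qF[x,y]=\dim(Z_qF(x)\cap B_qF(y))$ for $y\ne\top$, and $\dim Z_qF(x)$ for $y=\top$ ($Z_q,B_q$ = $q$-cycles, $q$-boundaries in the chain space of $K$). Lower corners of a simplex $\sigma$ are the minimal elements of $\{x:\sigma\in F(x)\}$; $F$ is non-degenerate if any two distinct lower corners differ in both coordinates. Notation: $xy:=ZB_qF[x,y]$ for $x\le y$; $wxyz:=xz-xy-wz+wy$ for $w\le x\le y\le z$. *)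

(* Defs.v *)
From HB Require Import structures.
From mathcomp Require Import all_boot all_order all_algebra.
Set Implicit Arguments. Unset Strict Implicit. Unset Printing Implicit Defensive.
Import GRing.Theory.
Local Open Scope ring_scope.

(* Vertices of K are 'I_N; a simplex is a (nonempty) finite set of vertices,
   a simplicial complex is a set of simplices. *)

Definition is_complex (N : nat) (K : {set {set 'I_N}}) : bool :=
  [forall s in K, (s != set0) &&
     [forall t : {set 'I_N}, ((t \subset s) && (t != set0)) ==> (t \in K)]].

(* Chain space of all simplices (with coefficients in the field R);
   the q-chains of a subcomplex are spanned by the basis vectors of its
   simplices of cardinality q+1 (dimension q). *)
Definition chain (R : fieldType) (N : nat) := {ffun {set 'I_N} -> R^o}.

(* incidence coefficient [s : t] of the (oriented, vertices ordered by their
   index) simplex s on its codimension-one face t; non-augmented (no empty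
   simplex). *)
Definition incid (R : fieldType) (N : nat) (t s : {set 'I_N}) : R :=
  if t == set0 then 0 else
  \sum_(v in s) (if t == s :\ v
                 then (-1) ^+ #|[set u in s | (val u < val v)%N]| else 0).

Definition bdsimp (R : fieldType) (N : nat) (s : {set 'I_N}) : chain R N :=
  [ffun t => incid R t s].

Definition bd (R : fieldType) (N : nat) (c : chain R N) : chain R N :=
  \sum_(s : {set 'I_N}) c s *: bdsimp R s.

Definition basis_chain (R : fieldType) (N : nat) (s : {set 'I_N}) : chain R N :=
  [ffun t => (t == s)%:R].

Definition Cq (R : fieldType) (N : nat) (A : {set {set 'I_N}}) (q : nat)
  : {vspace chain R N} :=
  <<[seq basis_chain R s | s <- enum [set s in A | #|s| == q.+1]]>>%VS.

Definition Zq (R : fieldType) (N : nat) (A : {set {set 'I_N}}) (q : nat)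
  : {vspace chain R N} :=
  (Cq R A q :&: lker (linfun (@bd R N)))%VS.

Definition Bq (R : fieldType) (N : nat) (A : {set {set 'I_N}}) (q : nat)
  : {vspace chain R N} :=
  (linfun (@bd R N) @: Cq R A q.+1)%VS.

Definition in_grid (n : nat) (x : nat * nat) : bool := (x.1 <= n)%N && (x.2 <= n)%N.
Definition leg (x y : nat * nat) : bool := (x.1 <= y.1)%N && (x.2 <= y.2)%N.

Definition is_2filtration (N n : nat) (K : {set {set 'I_N}})
  (F : nat * nat -> {set {set 'I_N}}) : Prop :=
  [/\ is_complex K,
      (forall x, in_grid n x -> is_complex (F x) /\ F x \subset K),
      (forall x y, in_grid n x -> in_grid n y -> leg x y -> F x \subset F y),
      F (0%N, 0%N) = set0 &
      F (n, n) = K].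

Definition lower_corner (N n : nat) (F : nat * nat -> {set {set 'I_N}})
  (s : {set 'I_N}) (x : nat * nat) : Prop :=
  [/\ in_grid n x, s \in F x &
      forall y, in_grid n y -> leg y x -> s \in F y -> y = x].

Definition nondegenerate_filt (N n : nat) (F : nat * nat -> {set {set 'I_N}}) : Prop :=
  forall s x y, lower_corner n F s x -> lower_corner n F s y -> x <> y ->
    x.1 <> y.1 /\ x.2 <> y.2.

Definition ZB (R : fieldType) (N n : nat) (F : nat * nat -> {set {set 'I_N}})
  (q : nat) (x y : nat * nat) : nat :=
  if y == (n, n) then \dim (Zq R (F x) q)
  else \dim (Zq R (F x) q :&: Bq R (F y) q)%VS.

(* wxyz := xz - xy - wz + wy *)
Definition rk4 (R : fieldType) (N n : nat) (F : nat * nat -> {set {set 'I_N}})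
  (q : nat) (w x y z : nat * nat) : int :=
  (ZB R n F q x z)%:Z - (ZB R n F q x y)%:Z - (ZB R n F q w z)%:Z
  + (ZB R n F q w y)%:Z.

(* Main.v *)
Require Import Defs.
From HB Require Import structures.
From mathcomp Require Import all_boot all_order all_algebra.
From mathcomp Require Import zify ring lra.
Local Open Scope ring_scope.

Section Aux.
Variables (R : fieldType) (N n : nat) (F : nat * nat -> {set {set 'I_N}}) (q : nat).

Lemma nn_dim (vT : vectType R) (U1 U2 V1 V2 : {vspace vT}) :
  (U1 <= U2)%VS -> (V1 <= V2)%VS ->
  (\dim (U2 :&: V1) + \dim (U1 :&: V2) <= \dim (U2 :&: V2) + \dim (U1 :&: V1))%N.
Proof.
move=> sU sV.
rewrite -dimv_sum_cap leq_add //; apply: dimvS.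
  by rewrite subv_add !capvS.
rewrite subv_cap; apply/andP; split.
  exact: subv_trans (capvSr _ _) (capvSl _ _).
exact: subv_trans (capvSl _ _) (capvSr _ _).
Qed.

Lemma Cq_mono (A A' : {set {set 'I_N}}) : A \subset A' -> (Cq R A q <= Cq R A' q)%VS.
Proof.
move=> sA; apply: sub_span => v /mapP [s]; rewrite mem_enum inE => /andP [sa sq] ->.
apply/mapP; exists s => //; rewrite mem_enum inE sq andbT.
exact: (subsetP sA).
Qed.

Lemma Zq_mono (A A' : {set {set 'I_N}}) : A \subset A' -> (Zq R A q <= Zq R A' q)%VS.
Proof. by move=> sA; rewrite /Zq capvS // Cq_mono. Qed.

Lemma Bq_mono (A A' : {set {set 'I_N}}) : A \subset A' -> (Bq R A q <= Bq R A' q)%VS.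
Proof.
move=> sA; rewrite /Bq limgS //.
apply: sub_span => v /mapP [s]; rewrite mem_enum inE => /andP [sa sq] ->.
apply/mapP; exists s => //; rewrite mem_enum inE sq andbT.
exact: (subsetP sA).
Qed.

Definition Bp (z : nat * nat) : {vspace chain R N} :=
  if z == (n, n) then fullv else Bq R (F z) q.

Lemma ZBE x z : ZB R n F q x z = \dim (Zq R (F x) q :&: Bp z).
Proof. by rewrite /ZB /Bp; case: ifP => _ //; rewrite capvf. Qed.

Lemma rk4_ge0 K w x y z : is_2filtration n K F ->
  in_grid n w -> in_grid n x -> in_grid n y -> in_grid n z ->
  leg w x -> leg y z -> y != (n, n) -> 0 <= rk4 R n F q w x y z.
Proof.
move=> [_ _ mono _ _] gw gx gy gz lwx lyz yn.
have h1 : (Zq R (F w) q <= Zq R (F x) q)%VS by apply: Zq_mono; apply: mono.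
have h2 : (Bp y <= Bp z)%VS.
  rewrite /Bp (negbTE yn); case: ifP => _; first exact: subvf.
  by apply: Bq_mono; apply: mono.
have := @nn_dim _ _ _ _ _ h1 h2.
rewrite /rk4 !ZBE.
move: (\dim _) (\dim _) (\dim _) (\dim _) => A B C D H.
lia.
Qed.

Lemma split_x w x m y z : rk4 R n F q w x y z = rk4 R n F q w m y z + rk4 R n F q m x y z.
Proof. rewrite /rk4; move: (ZB R n F q) => P; ring. Qed.
Lemma split_y w x y m z : rk4 R n F q w x y z = rk4 R n F q w x y m + rk4 R n F q w x m z.
Proof. rewrite /rk4; move: (ZB R n F q) => P; ring. Qed.
End Aux.
Lemma arith (A B C D : int): 0<=A->0<=B->0<=C->0<=D-> A+B+C+D = 1 -> (A+B)*(A+C)=A.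
Proof. nia. Qed.


Theorem mainTheorem4 (R : fieldType) (N n : nat) (K : {set {set 'I_N}})
  (F : nat * nat -> {set {set 'I_N}}) (q : nat) (d h : nat * nat) :
  is_2filtration n K F -> nondegenerate_filt n F ->
  (1 <= d.1)%N -> (1 <= d.2)%N ->
  (d.1 <= h.1 - 1)%N -> (d.2 <= h.2 - 1)%N ->
  (h.1 <= n)%N -> (h.2 <= n)%N ->
  let a := (d.1 - 1, d.2 - 1)%N in
  let b := (d.1 - 1, d.2)%N in
  let c := (d.1, d.2 - 1)%N in
  let e := (h.1 - 1, h.2 - 1)%N in
  let f := (h.1 - 1, h.2)%N in
  let g := (h.1, h.2 - 1)%N in
  rk4 R n F q a d e h = 1 ->
  [/\ rk4 R n F q a b e h * rk4 R n F q a d e f = rk4 R n F q a b e f,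
      rk4 R n F q a c e h * rk4 R n F q a d e f = rk4 R n F q a c e f,
      rk4 R n F q a b e h * rk4 R n F q a d e g = rk4 R n F q a b e g &
      rk4 R n F q a c e h * rk4 R n F q a d e g = rk4 R n F q a c e g].
Proof.
case: d h => [d1 d2] [h1' h2'] /= HF _ ? ? ? ? ? ? H.
set a := ((d1 - 1)%N, (d2 - 1)%N) in H *.
set e := ((h1' - 1)%N, (h2' - 1)%N) in H *.
have gen : forall X Y, in_grid n X -> in_grid n Y -> leg a X -> leg X (d1, d2) ->
    leg e Y -> leg Y (h1', h2') -> Y != (n, n) ->
    rk4 R n F q a X e (h1', h2') * rk4 R n F q a (d1, d2) e Y = rk4 R n F q a X e Y.
  move=> X Y gX gY aX Xd eY Yh Yn.
  have ga : in_grid n a by rewrite /a /in_grid /=; lia.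
  have gd : in_grid n (d1, d2) by rewrite /in_grid /=; lia.
  have ge : in_grid n e by rewrite /e /in_grid /=; lia.
  have gh : in_grid n (h1', h2') by rewrite /in_grid /=; lia.
  have en : e != (n, n) by rewrite /e; apply/eqP => -[]; lia.
  have x1 := @rk4_ge0 R N n F q K _ _ _ _ HF ga gX ge gY aX eY en.
  have x2 := @rk4_ge0 R N n F q K _ _ _ _ HF ga gX gY gh aX Yh Yn.
  have x3 := @rk4_ge0 R N n F q K _ _ _ _ HF gX gd ge gY Xd eY en.
  have x4 := @rk4_ge0 R N n F q K _ _ _ _ HF gX gd gY gh Xd Yh Yn.
  have E1 : rk4 R n F q a X e (h1', h2') =
    rk4 R n F q a X e Y + rk4 R n F q a X Y (h1', h2') by exact: split_y.
  have E2 : rk4 R n F q a (d1, d2) e Y =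
    rk4 R n F q a X e Y + rk4 R n F q X (d1, d2) e Y by exact: split_x.
  have E3 : rk4 R n F q a (d1, d2) e (h1', h2') =
    rk4 R n F q a X e Y + rk4 R n F q a X Y (h1', h2') +
    rk4 R n F q X (d1, d2) e Y + rk4 R n F q X (d1, d2) Y (h1', h2')
    by rewrite (split_x R N n F q a (d1, d2) X) (split_y R N n F q a X e Y) (split_y R N n F q X (d1, d2) e Y) !GRing.addrA.
  rewrite E1 E2; rewrite E3 in H.
  move: x1 x2 x3 x4 H. exact: arith.
split; apply: gen; rewrite /a /e /in_grid /leg /=; try lia; apply/eqP => -[]; lia.
Qed.
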